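(* Let $s$ satisfy (s1)–(s2). Suppose $p$ is a measurable function on $\Omega$ with $p\le M$ for some finite $M$, and $\rho(x)\in\partial s^*(p(x),x)$ for a.e. $x\in\Omega$. Then $\rho\in L^\infty(\Omega)$ and $\rho p\in L^\infty(\Omega)$, and both bounds depend only on $s$ and $M$.
   Context: $\Omega\subset\mathbb{R}^d$ bounded smooth domain. $s:\mathbb{R}\times\Omega\to\mathbb{R}\cup\{+\infty\}$ with: (s1) $s(\cdot,x)$ proper, lower semicontinuous, convex for every $x$; (s2) $s(z,x)=+\infty$ for $z<0$, $s(0,x)=0$, $\inf_{(z,x)}s(z,x)>-\infty$, and $\lim_{z\to\infty}\inf_{x\in\Omega}s(z,x)/z=+\infty$. $s^*(p,x)=\sup_{z\in\mathbb{R}}(pz-s(z,x))$ and $\partial s^*(p,x)$ is its subdifferential in $p$. *)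

(* Defs.v *)
From HB Require Import structures.
From mathcomp Require Import all_boot all_order all_algebra.
From mathcomp Require Import all_classical all_reals all_analysis.
Set Implicit Arguments. Unset Strict Implicit. Unset Printing Implicit Defensive.
Import Order.TTheory GRing.Theory Num.Theory.
Import numFieldNormedType.Exports.
Local Open Scope classical_set_scope.
Local Open Scope ring_scope.
Local Open Scope ereal_scope.

Definition econvex {R : realType} (f : R -> \bar R) : Prop :=
  forall (a b t : R), (0 < t)%R -> (t < 1)%R ->
    f (t * a + (1 - t) * b)%R <= t%:E * f a + (1 - t)%:E * f b.

Definition eproper {R : realType} (f : R -> \bar R) : Prop :=
  (forall z, f z != -oo) /\ (exists z, f z \is a fin_num).

Definition conj_s {R : realType} {T : Type} (s : R -> T -> \bar R)
  (p : R) (x : T) : \bar R :=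
  ereal_sup [set (p * z)%:E - s z x | z in [set: R]].

Definition subdiff {R : realType} (g : R -> \bar R) (p : R) : set R :=
  [set r : R | g p \is a fin_num /\
     forall q : R, g p + (r * (q - p))%:E <= g q].

Definition s_hyp {R : realType} {T : Type} (Omega : set T)
  (s : R -> T -> \bar R) : Prop :=
  (forall x, Omega x ->
     eproper (s^~ x) /\ @lower_semicontinuous _ R (fun z : R => s z x) /\ econvex (s^~ x)) /\
  (forall x, Omega x -> forall z : R, (z < 0)%R -> s z x = +oo) /\
  (forall x, Omega x -> s 0%R x = 0) /\
  (-oo < ereal_inf [set s zx.1 zx.2 | zx in [set: R] `*` Omega]) /\
  ((ereal_inf [set s z x | x in Omega] * (z^-1)%:E) @[z --> +oo%R] --> +oo).

(* Main.v *)
Require Import Defs.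
From HB Require Import structures.
From mathcomp Require Import all_boot all_order all_algebra.
From mathcomp Require Import all_classical all_reals all_analysis.
From mathcomp Require Import lra.
Import Order.TTheory GRing.Theory Num.Theory.
Local Open Scope classical_set_scope.
Local Open Scope ring_scope.

Lemma pt_bound (R : realType) (g : R -> \bar R) (K B M p r : R) :
  (forall q, (0 <= g q)%E) -> (forall q q', q <= q' -> (g q <= g q')%E) ->
  (g (M + 1)%R <= K%:E)%E -> (g 0%R <= (- B)%:E)%E -> p <= M ->
  subdiff g p r -> 0 <= r /\ r <= K /\ - (r * p) <= - B.
Proof.
move=> g0 gm gK g0B pM [fp sd].
have [gp egp] : exists gp : R, g p = gp%:E by exists (fine (g p)); rewrite fineK.
have gp0 : 0 <= gp by rewrite -lee_fin -egp.
have r0 : 0 <= r.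
  have := le_trans (sd (p - 1)) (gm (p - 1) p ltac:(lra)).
  rewrite egp -EFinD lee_fin; nra.
split => //; split.
  have := le_trans (sd (p + 1)) (le_trans (gm (p + 1) (M + 1) ltac:(lra)) gK).
  rewrite egp -EFinD lee_fin; nra.
have := le_trans (sd 0) g0B.
rewrite egp -EFinD lee_fin; nra.
Qed.

Section Conj.
Variables (R : realType) (T : Type) (s : R -> T -> \bar R) (x : T) (B : R).
Hypothesis H0 : s 0%R x = 0%E.
Hypothesis Hneg : forall z : R, z < 0 -> s z x = +oo%E.
Hypothesis HB : forall z, (B%:E <= s z x)%E.

Lemma conj_ge0 q : (0 <= conj_s s q x)%E.
Proof.
apply: ereal_sup_ubound; exists 0%R => //.
by rewrite H0 mulr0 sube0.
Qed.

Lemma conj_mono q q' : q <= q' -> (conj_s s q x <= conj_s s q' x)%E.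
Proof.
move=> qq; apply: ge_ereal_sup => _ [z _ <-].
have [z0|z0] := ltP z 0.
  by rewrite Hneg //= leNye.
apply: le_trans (_ : _ <= (q' * z)%:E - s z x)%E _.
  by apply: leeB => //; rewrite lee_fin ler_wpM2r.
by apply: ereal_sup_ubound; exists z.
Qed.

Lemma conj_0 : (conj_s s 0%R x <= (- B)%:E)%E.
Proof.
apply: ge_ereal_sup => _ [z _ <-].
by rewrite mul0r EFinN -(sub0e B%:E); apply: leeB.
Qed.

Lemma conj_K (A Z : R) : 0 <= Z -> B <= 0 ->
  (forall z, Z < z -> (((A + 1) * z)%:E <= s z x)%E) ->
  (conj_s s A x <= (`|A| * Z - B)%:E)%E.
Proof.
move=> Z0 B0 HZ; apply: ge_ereal_sup => _ [z _ <-].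
have [z0|z0] := ltP z 0.
  by rewrite Hneg //= leNye.
have [zZ|zZ] := leP z Z.
  rewrite EFinB; apply: leeB => //; rewrite lee_fin.
  have := ler_norm A; have := normr_ge0 A; have := ler_normr A A.
  have : - `|A| <= A by rewrite lerNl -normrN ler_norm.
  nra.
apply: le_trans (leeB (lexx _) (HZ _ zZ)) _.
rewrite -EFinB lee_fin.
have : 0 <= `|A| * Z by rewrite mulr_ge0.
nra.
Qed.
End Conj.

Theorem lemma2p14 (d : measure_display) (T : measurableType d) (R : realType)
  (mu : {measure set T -> \bar R}) (Omega : set T) (mOmega : measurable Omega)
  (s : R -> T -> \bar R) (hs : s_hyp Omega s) (M : R) :
  exists C1 C2 : R,
    forall p rho : T -> R,
      measurable_fun Omega p ->
      measurable_fun Omega rho ->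
      {ae mu, forall x, Omega x -> p x <= M} ->
      {ae mu, forall x, Omega x -> subdiff (conj_s s ^~ x) (p x) (rho x)} ->
      {ae mu, forall x, Omega x -> `|rho x| <= C1} /\
      {ae mu, forall x, Omega x -> `|rho x * p x| <= C2}.
Proof.
case: hs => _ [hneg [h0 [hinf hlim]]].
have [B [B0 HB]] : exists B : R, B <= 0 /\
    forall x, Omega x -> forall z, (B%:E <= s z x)%E.
  move: hinf; case E: (ereal_inf _) => [b| |] // _.
  - exists (Num.min b 0); split; first by rewrite ge_min lexx orbT.
    move=> x Ox z; apply: le_trans (_ : (b%:E <= _)%E).
      by rewrite lee_fin ge_min lexx.
    by rewrite -E; apply: ereal_inf_lbound; exists (z, x).
  - exists 0; split => // x Ox z.
    have : (+oo <= s z x)%E by rewrite -E; apply: ereal_inf_lbound; exists (z, x).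
    by rewrite leye_eq => /eqP ->; rewrite leey.
have [Z [Z0 HZ]] : exists Z : R, 0 <= Z /\ forall x, Omega x -> forall z, Z < z ->
    ((((M + 1) + 1) * z)%:E <= s z x)%E.
  have [Z0 [_ HZ0]] := cvgey_ge hlim (M + 1 + 1).
  exists (Num.max Z0 0); split; first by rewrite le_max lexx orbT.
  move=> x Ox z; rewrite gt_max => /andP[zZ z0].
  have := HZ0 z zZ; rewrite lee_pdivlMr // => h.
  apply: le_trans (_ : ereal_inf [set s z x0 | x0 in Omega] <= _)%E.
    by rewrite EFinM.
  by apply: ereal_inf_lbound; exists x.
set K := `|M + 1| * Z - B.
exists K, (Num.max (K * `|M|) (- B)).
move=> p rho _ _ hp hsub; split.
- apply: filterS2 hp hsub => x hpx hsx Ox.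
  have [] := @pt_bound R (conj_s s ^~ x) K B M (p x) (rho x)
    (@conj_ge0 _ _ s x (h0 x Ox)) (@conj_mono _ _ s x (hneg x Ox))
    (@conj_K _ _ s x B (hneg x Ox) (HB x Ox) (M + 1) Z Z0 B0 (HZ x Ox)) (@conj_0 _ _ s x B (HB x Ox)) (hpx Ox) (hsx Ox).
  by move=> r0 [rK _]; rewrite ger0_norm.
- apply: filterS2 hp hsub => x hpx hsx Ox.
  have [] := @pt_bound R (conj_s s ^~ x) K B M (p x) (rho x)
    (@conj_ge0 _ _ s x (h0 x Ox)) (@conj_mono _ _ s x (hneg x Ox))
    (@conj_K _ _ s x B (hneg x Ox) (HB x Ox) (M + 1) Z Z0 B0 (HZ x Ox)) (@conj_0 _ _ s x B (HB x Ox)) (hpx Ox) (hsx Ox).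
  move=> r0 [rK rB]; have pM := hpx Ox.
  have h1 : K * `|M| <= Num.max (K * `|M|) (- B) by rewrite le_max lexx.
  have h2 : - B <= Num.max (K * `|M|) (- B) by rewrite le_max lexx orbT.
  have := ler_norm M; have := normr_ge0 M.
  rewrite ler_norml; nra.
Qed.
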